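(* Let $A$ and $B$ be $k$-algebras with a twisting map $\tau\colon B\otimes A\to A\otimes B$, and endow $A$ and $B$ with their cofinite topologies. If $\tau\colon B\otimes^! A\to A\otimes^! B$ is continuous, then its continuous dual, viewed via the isomorphisms $(A\otimes^!B)^\circ\cong A^\circ\otimes B^\circ$ and $(B\otimes^!A)^\circ\cong B^\circ\otimes A^\circ$ as a map \[\tau^\circ\colon A^\circ\otimes B^\circ\to B^\circ\otimes A^\circ,\] is a cotwisting map for the coalgebras $A^\circ$ and $B^\circ$, and the continuous dual of the homeomorphism $A\otimes^! B\to A\otimes_\tau B$ (identity on the underlying space) yields an isomorphism of coalgebras \[(A\otimes_\tau B)^\circ\xrightarrow{\sim} A^\circ\otimes^{\tau^\circ}B^\circ.\]
   Context: $k$ is a field (discrete topology); algebras are unital associative, coalgebras counital coassociative. For an algebra $R$, the cofinite topology is the linear topology whose open subspaces are those containing a two-sided ideal of finite codimension; $R^\circ$ denotes the finite dual coalgebra $\{\phi\in R^*:\ker\phi$ contains an ideal of finite codimension$\}$ (equivalently the space of functionals continuous for the cofinite topology), with comultiplication induced by the dual of multiplication and counit $\phi\mapsto\phi(1)$. For linearly topologized spaces $E,F$, $E\otimes^!F$ is $E\otimes F$ with the linear topology whose open subspaces are those containing $E_0\otimes F+E\otimes F_0$ for some open subspaces $E_0,F_0$; the continuous dual is $E^\circ=\mathrm{Top}_k(E,k)$. A linear map $\tau\colon B\otimes A\to A\otimes B$ is a twisting map if $m_\tau=(m_A\otimes m_B)\circ(\mathrm{id}_A\otimes\tau\otimes\mathrm{id}_B)$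 is an associative multiplication on $A\otimes B$ with identity $1_A\otimes1_B$; this algebra is $A\otimes_\tau B$. For coalgebras $C,D$, a linear map $\phi\colon C\otimes D\to D\otimes C$ is a cotwisting map if $\Delta_\phi=(\mathrm{id}_C\otimes\phi\otimes\mathrm{id}_D)\circ(\Delta_C\otimes\Delta_D)$ is a coassociative comultiplication on $C\otimes D$ with counit $\varepsilon_C\otimes\varepsilon_D$; this coalgebra is the cotwisted tensor product $C\otimes^\phi D$. *)

(* Defs.v *)
From HB Require Import structures.
From mathcomp Require Import all_boot all_order all_algebra.
From mathcomp Require Import boolp classical_sets functions.
From Stdlib Require Import ClassicalEpsilon.
From Stdlib Require List.
Set Implicit Arguments. Unset Strict Implicit. Unset Printing Implicit Defensive.
Import GRing.Theory.
Local Open Scope ring_scope.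

(* Tensors.  An element of the n-fold tensor power (V (x) W)^{(x) n} is       *)
(* represented by a finite list of elementary tensors, each elementary tensor *)
(* (v1 (x) w1) (x) ... (x) (vn (x) wn) being a list [:: (v1,w1); ...].        *)
(* Two representations are equal as tensors (tensn_eq) iff they agree under   *)
(* all products of linear functionals (over a field these separate points of  *)
(* a tensor product).  Scalars are absorbed in the first factor.              *)

Section Tensors.
Variable k : fieldType.

Definition lfun (V : lmodType k) (f : V -> k) : Prop :=
  forall (c : k) (x y : V), f (c *: x + y) = c * f x + f y.

Definition bilin (V W : lmodType k) (F : V -> W -> k) : Prop :=
  (forall w, lfun (fun v => F v w)) /\ (forall v, lfun (F v)).

Variables V W : lmodType k.

Definition tensn_val (l : nat -> V -> k) (m : nat -> W -> k)
    (X : seq (seq (V * W)%type)) : k :=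
  \sum_(x <- X) \prod_(j <- zip (iota 0 (size x)) x)
      (l j.1 j.2.1 * m j.1 j.2.2).

Definition tensn_eq (X Y : seq (seq (V * W)%type)) : Prop :=
  forall (l : nat -> V -> k) (m : nat -> W -> k),
    (forall i, lfun (l i)) -> (forall i, lfun (m i)) ->
    tensn_val l m X = tensn_val l m Y.

Definition tens_eq (X Y : seq (V * W)%type) : Prop :=
  tensn_eq (map (fun p => [:: p]) X) (map (fun p => [:: p]) Y).

Definition tscale (c : k) (X : seq (V * W)%type) : seq (V * W)%type :=
  map (fun p => (c *: p.1, p.2)) X.

Definition tsub (X Y : seq (V * W)%type) : seq (V * W)%type := X ++ tscale (-1) Y.

Definition tspan (s : seq (seq (V * W)%type)) (c : nat -> k) : seq (V * W)%type :=
  flatten [seq tscale (c i) (nth [::] s i) | i <- iota 0 (size s)].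

Definition tsubspace (U : seq (V * W)%type -> Prop) : Prop :=
  [/\ U [::], (forall X Y, U X -> U Y -> U (X ++ Y)),
      (forall c X, U X -> U (tscale c X)) &
      (forall X Y, tens_eq X Y -> U X -> U Y)].

(* value of a bilinear form (= linear functional on V (x) W) on a tensor *)
Definition tform (F : V -> W -> k) (X : seq (V * W)%type) : k :=
  \sum_(p <- X) F p.1 p.2.

End Tensors.

Section Cofinite.
Variable k : fieldType.

Definition subspace (V : lmodType k) (U : V -> Prop) : Prop :=
  U 0 /\ forall (c : k) x y, U x -> U y -> U (c *: x + y).

Definition fincodim (V : lmodType k) (U : V -> Prop) : Prop :=
  exists s : seq V, forall x, exists c : nat -> k,
    U (x - \sum_(i < size s) c i *: s`_i).

Variable A : algType k.

Definition ideal (I : A -> Prop) : Prop :=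
  subspace I /\ forall a x, I x -> I (a * x) /\ I (x * a).

Definition cof_open (U : A -> Prop) : Prop :=
  subspace U /\
  exists I, [/\ ideal I, fincodim I & forall x, I x -> U x].

(* the finite dual A° : functionals continuous for the cofinite topology *)
Definition finite_dual (phi : A -> k^o) : Prop :=
  lfun phi /\
  exists I, [/\ ideal I, fincodim I & forall x, I x -> phi x = 0].

(* the comultiplication of A° : a chosen representative of Delta(phi) in
   A° (x) A°, characterized by  sum phi'(a) phi''(a') = phi(a a') *)
Definition fd_comul (phi : A -> k^o) : seq ((A -> k^o) * (A -> k^o))%type :=
  epsilon (inhabits [::]) (fun s =>
    (forall p, List.In p s -> finite_dual p.1 /\ finite_dual p.2) /\
    forall a a', \sum_(p <- s) p.1 a * p.2 a' = phi (a * a')).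

End Cofinite.

Section Tensor_bang.
Variable k : fieldType.
Variables A B : algType k.

(* open subspaces of A (x)^! B, A and B with their cofinite topologies *)
Definition tbang_open (U : seq (A * B)%type -> Prop) : Prop :=
  tsubspace U /\
  exists A0 B0, [/\ cof_open A0, cof_open B0,
      (forall a b, A0 a -> U [:: (a, b)]) &
      (forall a b, B0 b -> U [:: (a, b)])].

End Tensor_bang.

Section Twisting.
Variable k : fieldType.
Variables A B : algType k.

(* A linear map tau : B (x) A -> A (x) B is given (universal property) by a
   map  t : B -> A -> A (x) B  bilinear up to tensor equality. *)
Definition tau_bilin (t : B -> A -> seq (A * B)%type) : Prop :=
  (forall (c : k) b b' a,
      tens_eq (t (c *: b + b') a) (tscale c (t b a) ++ t b' a)) /\
  (forall (c : k) b a a',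
      tens_eq (t b (c *: a + a')) (tscale c (t b a) ++ t b a')).

Definition tau_ext (t : B -> A -> seq (A * B)%type) (X : seq (B * A)%type) :=
  flatten [seq t p.1 p.2 | p <- X].

(* m_tau = (m_A (x) m_B) o (id (x) tau (x) id) *)
Definition mtau (t : B -> A -> seq (A * B)%type) (X Y : seq (A * B)%type) :=
  flatten [seq flatten [seq [seq (x.1 * q.1, q.2 * y.2) | q <- t x.2 y.1]
                          | y <- Y] | x <- X].

Definition twisting_map (t : B -> A -> seq (A * B)%type) : Prop :=
  [/\ tau_bilin t,
      (forall X Y Z, tens_eq (mtau t (mtau t X Y) Z) (mtau t X (mtau t Y Z))),
      (forall X, tens_eq (mtau t [:: (1, 1)] X) X) &
      (forall X, tens_eq (mtau t X [:: (1, 1)]) X)].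

Definition tau_continuous (t : B -> A -> seq (A * B)%type) : Prop :=
  forall U, tbang_open U -> tbang_open (fun X => U (tau_ext t X)).

(* finite dual of the algebra A (x)_tau B; functionals on A (x) B are
   bilinear forms on A x B *)
Definition tideal (t : B -> A -> seq (A * B)%type) (I : seq (A * B)%type -> Prop) :=
  tsubspace I /\ forall X Y, I Y -> I (mtau t X Y) /\ I (mtau t Y X).

Definition tfincodim (I : seq (A * B)%type -> Prop) : Prop :=
  exists s : seq (seq (A * B)%type), forall X, exists c : nat -> k,
    I (tsub X (tspan s c)).

Definition twisted_finite_dual (t : B -> A -> seq (A * B)%type)
    (F : A -> B -> k^o) : Prop :=
  bilin F /\
  exists I, [/\ tideal t I, tfincodim I & forall X, I X -> tform F X = 0].

Definition twisted_comul_rep (t : B -> A -> seq (A * B)%type) (F : A -> B -> k^o)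
    (s : seq ((A -> B -> k^o) * (A -> B -> k^o))%type) : Prop :=
  (forall p, List.In p s -> twisted_finite_dual t p.1 /\ twisted_finite_dual t p.2)
  /\ forall X Y, \sum_(p <- s) tform p.1 X * tform p.2 Y =
                 tform F (mtau t X Y).

End Twisting.

Section Cotwisting.
Variable k : fieldType.
Variables A B : algType k.
Local Notation CA := (A -> k^o).
Local Notation CB := (B -> k^o).

Definition in_CD (Z : seq (CA * CB)%type) : Prop :=
  forall z, List.In z Z -> finite_dual z.1 /\ finite_dual z.2.

(* the bilinear form on A x B induced by an element of A° (x) B°, i.e. the
   standard map A° (x) B° -> (A (x)^! B)° *)
Definition cd_form (Z : seq (CA * CB)%type) : A -> B -> k^o :=
  fun a b => \sum_(z <- Z) z.1 a * z.2 b.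

(* tauo : A° (x) B° -> B° (x) A° (linear, given on elementary tensors) is the
   continuous dual of tau, read through (X (x)^! Y)° = X° (x) Y° *)
Definition is_dual_of (t : B -> A -> seq (A * B)%type)
    (tauo : CA -> CB -> seq (CB * CA)%type) : Prop :=
  forall phi psi, finite_dual phi -> finite_dual psi ->
  forall b a, \sum_(r <- tauo phi psi) r.1 b * r.2 a =
              \sum_(q <- t b a) phi q.1 * psi q.2.

(* Delta_phi = (id (x) phi (x) id) o (Delta_C (x) Delta_D), C = A°, D = B° *)
Definition cotw_comul (tauo : CA -> CB -> seq (CB * CA)%type) (Z : seq (CA * CB)%type)
    : seq (seq (CA * CB)%type) :=
  flatten [seq flatten [seq flatten [seq
     [seq [:: (p.1, r.1); (r.2, q.2)] | r <- tauo p.2 q.1]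
     | q <- fd_comul z.2] | p <- fd_comul z.1] | z <- Z].

Definition cd_counit (z : CA * CB) : k := z.1 1 * z.2 1.

Definition cotwisting_map (tauo : CA -> CB -> seq (CB * CA)%type) : Prop :=
  [/\
      (forall phi psi, finite_dual phi -> finite_dual psi ->
         forall r, List.In r (tauo phi psi) -> finite_dual r.1 /\ finite_dual r.2),
      (forall (c : k) phi phi' psi,
         finite_dual phi -> finite_dual phi' -> finite_dual psi ->
         tens_eq (tauo (c *: phi + phi') psi)
                 (tscale c (tauo phi psi) ++ tauo phi' psi)),
      (forall (c : k) phi psi psi',
         finite_dual phi -> finite_dual psi -> finite_dual psi' ->
         tens_eq (tauo phi (c *: psi + psi'))
                 (tscale c (tauo phi psi) ++ tauo phi psi')),
      (* coassociativity of Delta_tauo *)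
      (forall Z, in_CD Z ->
         tensn_eq
           (flatten [seq [seq w ++ behead x | w <- cotw_comul tauo (take 1 x)]
                    | x <- cotw_comul tauo Z])
           (flatten [seq [seq take 1 x ++ w | w <- cotw_comul tauo (behead x)]
                    | x <- cotw_comul tauo Z])) &
      (* counit eps_C (x) eps_D *)
      (forall Z, in_CD Z ->
         tens_eq [seq (cd_counit (nth (0, 0) w 0) *: (nth (0, 0) w 1).1,
                       (nth (0, 0) w 1).2) | w <- cotw_comul tauo Z] Z /\
         tens_eq [seq (cd_counit (nth (0, 0) w 1) *: (nth (0, 0) w 0).1,
                       (nth (0, 0) w 0).2) | w <- cotw_comul tauo Z] Z)].

Definition cd_rep (F : A -> B -> k^o) (Z : seq (CA * CB)%type) : Prop :=
  in_CD Z /\ forall a b, cd_form Z a b = F a b.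

Definition dual_id_coalg_iso (t : B -> A -> seq (A * B)%type)
    (tauo : CA -> CB -> seq (CB * CA)%type) : Prop :=
  [/\
      (forall F, twisted_finite_dual t F -> exists Z, cd_rep F Z),
      (forall Z, in_CD Z -> twisted_finite_dual t (cd_form Z)),
      (forall Z Z', in_CD Z -> in_CD Z' ->
         (forall a b, cd_form Z a b = cd_form Z' a b) -> tens_eq Z Z'),
      (* compatible with comultiplications *)
      (forall F Z (s : seq (((A -> B -> k^o) * (A -> B -> k^o)) *
                           (seq (CA * CB) * seq (CA * CB)))%type),
         twisted_finite_dual t F -> cd_rep F Z ->
         twisted_comul_rep t F (map fst s) ->
         (forall j, List.In j s -> cd_rep j.1.1 j.2.1 /\ cd_rep j.1.2 j.2.2) ->
         tensn_eq (flatten [seq [seq [:: x; y] | x <- j.2.1, y <- j.2.2]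
                           | j <- s])
                  (cotw_comul tauo Z)) &
      (forall F Z, twisted_finite_dual t F -> cd_rep F Z ->
         \sum_(z <- Z) cd_counit z = F 1 1)].

End Cotwisting.

(* Main.v *)
Require Import Defs.
From HB Require Import structures.
From mathcomp Require Import all_boot all_order all_algebra.
From mathcomp Require Import boolp classical_sets functions.
From Stdlib Require Import ClassicalEpsilon.
From Stdlib Require List.
From mathcomp Require Import ring.
Set Implicit Arguments. Unset Strict Implicit. Unset Printing Implicit Defensive.
Import GRing.Theory.
Local Open Scope ring_scope.
Section Basics.
Variable k : fieldType.

Section L.
Variable V : lmodType k.
Variable f : V -> k.
Hypothesis hf : lfun f.
Lemma lfun0 : f 0 = 0.
Proof.
have H := hf 1 0 0; rewrite scaler0 addr0 mul1r in H.
by apply: (addrI (f 0)); rewrite addr0 -H.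
Qed.
Lemma lfunD x y : f (x + y) = f x + f y.
Proof. by have := hf 1 x y; rewrite scale1r mul1r. Qed.
Lemma lfunZ c x : f (c *: x) = c * f x.
Proof. by have := hf c x 0; rewrite addr0 lfun0 addr0. Qed.
Lemma lfunN x : f (- x) = - f x.
Proof. by rewrite -scaleN1r lfunZ mulN1r. Qed.
Lemma lfunB x y : f (x - y) = f x - f y.
Proof. by rewrite lfunD lfunN. Qed.
Lemma lfun_sum (I : Type) (r : seq I) (P : pred I) (F : I -> V) :
  f (\sum_(i <- r | P i) F i) = \sum_(i <- r | P i) f (F i).
Proof. by apply: (big_morph f lfunD lfun0). Qed.
End L.

Section T.
Variables V W : lmodType k.
Implicit Types X Y Z : seq (V * W)%type.
Definition tval (l : V -> k) (m : W -> k) (X : seq (V * W)%type) : k :=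
  \sum_(p <- X) l p.1 * m p.2.

Lemma tensn_val_single l m (X : seq (V * W)%type) :
  tensn_val l m (map (fun p => [:: p]) X) = tval (l 0%N) (m 0%N) X.
Proof.
rewrite /tensn_val /tval big_map; apply: eq_bigr => p _.
by rewrite /= big_cons big_nil mulr1.
Qed.

Lemma tens_eqP (X Y : seq (V * W)%type) :
  tens_eq X Y <-> (forall l m, lfun l -> lfun m -> tval l m X = tval l m Y).
Proof.
split.
  by move=> H l m hl hm; have := H (fun _ => l) (fun _ => m) (fun _ => hl) (fun _ => hm);
  rewrite !tensn_val_single.
by move=> H l m hl hm; rewrite !tensn_val_single; apply: H.
Qed.

Lemma tval_cat l m X Y : tval l m (X ++ Y) = tval l m X + tval l m Y.
Proof. by rewrite /tval big_cat. Qed.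
Lemma tval_nil l m : tval l m [::] = 0.
Proof. by rewrite /tval big_nil. Qed.
Lemma tval_cons l m p X : tval l m (p :: X) = l p.1 * m p.2 + tval l m X.
Proof. by rewrite /tval big_cons. Qed.
Lemma tval_scale l m c X : lfun l -> tval l m (tscale c X) = c * tval l m X.
Proof.
move=> hl; rewrite /tval /tscale big_map mulr_sumr; apply: eq_bigr => p _.
by rewrite /= (lfunZ hl) mulrA.
Qed.
Lemma tval_tsub l m X Y : lfun l -> tval l m (tsub X Y) = tval l m X - tval l m Y.
Proof. by move=> hl; rewrite /tsub tval_cat tval_scale // mulN1r. Qed.
Lemma tval_tspan l m s c : lfun l ->
  tval l m (tspan s c) = \sum_(i < size s) c i * tval l m (nth [::] s i).
Proof.
move=> hl; rewrite /tspan /tval big_flatten /= big_map.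
rewrite -(big_mkord xpredT (fun i => c i * tval l m (nth [::] s i))) /index_iota subn0.
by apply: eq_bigr => i _; rewrite -(tval_scale m _ _ hl).
Qed.

Lemma tens_eq_refl X : tens_eq X X.
Proof. by apply/tens_eqP. Qed.
Lemma tens_eq_sym X Y : tens_eq X Y -> tens_eq Y X.
Proof. by move/tens_eqP=> H; apply/tens_eqP=> l m hl hm; rewrite H. Qed.
Lemma tens_eq_trans X Y Z : tens_eq X Y -> tens_eq Y Z -> tens_eq X Z.
Proof. by move/tens_eqP=> H /tens_eqP H'; apply/tens_eqP=> l m hl hm; rewrite H ?H'. Qed.
End T.
End Basics.
Section Fincodim.
Variable k : fieldType.

Definition shiftc (l : k) (c : nat -> k) : nat -> k :=
  fun i => if i is j.+1 then c j else l.

Lemma fincodim_mono (V : lmodType k) (J J' : V -> Prop) :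
  (forall x, J x -> J' x) -> fincodim J -> fincodim J'.
Proof. by move=> H [s Hs]; exists s => x; have [c Hc] := Hs x; exists c; apply: H. Qed.

Lemma fincodimT (V : lmodType k) : fincodim (fun _ : V => True).
Proof. by exists [::] => x; exists (fun _ => 0). Qed.

Lemma fc_gen (V : lmodType k) (m : nat) : forall (U : V -> Prop) (R : V -> (nat -> k) -> Prop),
 subspace U -> fincodim U ->
 (forall x, exists c, R x c) ->
 (forall a x y c d, R x c -> R y d -> R (a *: x + y) (fun i => a * c i + d i)) ->
 (forall x c d, R x c -> (forall i, (i < m)%N -> c i = d i) -> R x d) ->
 fincodim (fun x => U x /\ R x (fun _ => 0)).
Proof.
elim: m => [|m IH] U R sU fU Rtot Rlin Rtr.
  case: fU => s Hs; exists s => x; have [c Hc] := Hs x; exists c; split => //.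
  by have [d Hd] := Rtot (x - \sum_(i < size s) c i *: s`_i); apply: Rtr Hd _.
pose R' x c := exists l, R x (shiftc l c).
have Rext : forall x c d, R x c -> (forall i, c i = d i) -> R x d.
  by move=> x c d H E; apply: Rtr H _ => i _; apply: E.
have := IH U R' sU fU.
case.
- move=> x; have [c Hc] := Rtot x; exists (fun i => c i.+1); exists (c 0%N).
  by apply: Rext Hc _; case.
- move=> a x y c d [l Hl] [l' Hl']; exists (a * l + l').
  by apply: Rext (Rlin _ _ _ _ _ Hl Hl') _; case.
- move=> x c d [l Hl] E; exists l; apply: Rtr Hl _; case => //= i Hi; apply: E.
move=> s' Hs'.
have F' : fincodim (fun x => U x /\ R' x (fun _ => 0)) by exists s'.
case: (classic (exists x0 l0, [/\ U x0, R x0 (shiftc l0 (fun _ => 0)) & l0 != 0])).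
  move=> [x0 [l0 [Ux0 Rx0 l0n0]]].
  exists (x0 :: s') => x.
  have [c [Ux1 [mu Rx1]]] := Hs' x.
  set x1 := x - _ in Ux1 Rx1.
  exists (shiftc (mu / l0) c).
  have -> : x - \sum_(i < size (x0 :: s')) shiftc (mu / l0) c i *: (x0 :: s')`_i
        = (- (mu / l0)) *: x0 + x1.
    rewrite /= big_ord_recl /= /x1 scaleNr opprD addrCA.
    by congr (_ + (_ - _)); apply: eq_bigr => i _.
  split; first by case: sU => _ H; apply: H.
  apply: Rext (Rlin _ _ _ _ _ Rx0 Rx1) _; case => /=.
    by rewrite mulNr divfK // addNr.
  by move=> _; rewrite mulr0 addr0.
move=> Hno; apply: fincodim_mono F' => x [Ux [l Rl]]; split => //.
have l0 : l = 0.
  by apply: contra_notP Hno => ln0; exists x, l; split => //; apply/eqP.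
by apply: Rext Rl _; case => //=; rewrite l0.
Qed.

Lemma fincodim_cap (V : lmodType k) (U I : V -> Prop) :
  subspace U -> subspace I -> fincodim U -> fincodim I ->
  fincodim (fun x => U x /\ I x).
Proof.
move=> sU [I0 sI] fU [s Hs].
pose R x c := I (x - \sum_(i < size s) c i *: s`_i).
have := @fc_gen V (size s) U R sU fU Hs.
case.
- move=> a x y c d Hx Hy; rewrite /R.
  have -> : a *: x + y - \sum_(i < size s) (a * c i + d i) *: s`_i =
            a *: (x - \sum_(i < size s) c i *: s`_i) + (y - \sum_(i < size s) d i *: s`_i).
    under eq_bigr => i _ do rewrite scalerDl -scalerA.
    rewrite big_split /= scalerBr scaler_sumr opprD !addrA; congr (_ - _).
    by rewrite addrAC.
  by apply: sI.
- move=> x c d Hc E; rewrite /R.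
  by under eq_bigr => i _ do rewrite -E //.
move=> s' Hs'; exists s' => x; have [c [Ux Rx]] := Hs' x; exists c; split => //.
move: Rx; rewrite /R.
have -> : \sum_(i < size s) (0:k) *: s`_i = 0 by apply: big1 => i _; exact: scale0r.
by rewrite subr0.
Qed.

Section Alg.
Variable A : algType k.

Lemma ideal_subspace (I : A -> Prop) : ideal I -> subspace I.
Proof. by case. Qed.

Lemma ideal_cap (I I' : A -> Prop) : ideal I -> ideal I' -> ideal (fun x => I x /\ I' x).
Proof.
move=> [[I0 sI] mI] [[I0' sI'] mI']; split; first split => //.
  by move=> c x y [? ?] [? ?]; split; [apply: sI | apply: sI'].
by move=> a x [Ix Ix']; have [? ?] := mI a x Ix; have [? ?] := mI' a x Ix'.
Qed.

Lemma finite_dual_lin (c : k) (phi phi' : A -> k^o) :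
  finite_dual phi -> finite_dual phi' -> finite_dual (c *: phi + phi').
Proof.
move=> [lp [I [iI fI vI]]] [lp' [I' [iI' fI' vI']]]; split.
  move=> a x y.
  change (c * phi (a *: x + y) + phi' (a *: x + y) =
          a * (c * phi x + phi' x) + (c * phi y + phi' y)).
  rewrite lp lp'; ring.
exists (fun x => I x /\ I' x); split.
- exact: ideal_cap.
- by apply: fincodim_cap => //; apply: ideal_subspace.
- move=> x [Ix Ix'].
change (c * phi x + phi' x = 0).
by rewrite vI // vI' // mulr0 addr0.
Qed.

Lemma finite_dual_scale (c : k) (phi : A -> k^o) :
  finite_dual phi -> finite_dual (c *: phi).
Proof.
move=> [lp [I [iI fI vI]]]; split.
  move=> a x y.
  change (c * phi (a *: x + y) = a * (c * phi x) + c * phi y).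
  rewrite lp; ring.
exists I; split => // x Ix.
change (c * phi x = 0).
by rewrite vI // mulr0.
Qed.

Lemma finite_dual_lfun (phi : A -> k^o) : finite_dual phi -> lfun phi.
Proof. by case. Qed.
End Alg.
End Fincodim.
From Stdlib Require Import Classical.
Section Decomp.
Variable k : fieldType.
Variables V W : lmodType k.
Variables (PV : V -> Prop) (PW : W -> Prop).

Definition gs (g : seq (W -> k)) (c : nat -> k) (w : W) : k :=
  \sum_(i < size g) c i * nth (fun _ => 0) g i w.

Lemma gsB g c d w : gs g (fun i => c i - d i) w = gs g c w - gs g d w.
Proof. by rewrite /gs -sumrB; apply: eq_bigr => i _; rewrite mulrBl. Qed.
Lemma gsZ g a c w : gs g (fun i => a * c i) w = a * gs g c w.
Proof. by rewrite /gs mulr_sumr; apply: eq_bigr => i _; rewrite mulrA. Qed.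
Lemma gsD g c d w : gs g (fun i => c i + d i) w = gs g c w + gs g d w.
Proof. by rewrite /gs -big_split; apply: eq_bigr => i _; rewrite mulrDl. Qed.
Lemma gs0 g w : gs g (fun _ => 0) w = 0.
Proof. by rewrite /gs big1 // => i _; rewrite mul0r. Qed.

Lemma decomp (g : seq (W -> k)) : forall (G : V -> W -> k),
 (forall w, lfun (fun v => G v w)) -> (forall v, lfun (G v)) ->
 (forall v, PV v -> forall w, G v w = 0) -> (forall w, PW w -> forall v, G v w = 0) ->
 (forall v, exists c : nat -> k, forall w, G v w = gs g c w) ->
 exists s : seq ((V -> k) * (W -> k)),
   (forall p, List.In p s -> [/\ lfun p.1, (forall v, PV v -> p.1 v = 0),
                                 lfun p.2 & (forall w, PW w -> p.2 w = 0)]) /\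
   forall v w, G v w = \sum_(p <- s) p.1 v * p.2 w.
Proof.
elim: g => [|g0 g IH] G hl hr hPV hPW hsp.
  exists [::]; split => // v w; have [c Hc] := hsp v.
  by rewrite Hc /gs big_ord0 big_nil.
case: (classic (forall v, exists c, forall w, G v w = gs g c w)) => [Hall|].
  exact: IH.
move=> /not_all_ex_not [v0 nsp0].
have [d Hd] := hsp v0.
have gsS : forall c w, gs (g0 :: g) c w = c 0%N * g0 w + gs g (fun i => c i.+1) w.
  move=> c w; rewrite /gs /= big_ord_recl /=; congr (_ + _).
have d0 : d 0%N != 0.
  apply/negP => /eqP d0; apply: nsp0; exists (fun i => d i.+1) => w.
  by rewrite Hd gsS d0 mul0r add0r.
have rep : forall v, exists l e, forall w, G v w = l * G v0 w + gs g e w.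
  move=> v; have [c Hc] := hsp v.
  exists (c 0%N / d 0%N), (fun i => c i.+1 - (c 0%N / d 0%N) * d i.+1) => w.
  rewrite Hc Hd !gsS gsB gsZ; field; exact: d0.
have uniq : forall l l' e e', (forall w, l * G v0 w + gs g e w = l' * G v0 w + gs g e' w) ->
    l = l'.
  move=> l l' e e' H; case: (eqVneq l l') => // neq; exfalso; apply: nsp0.
  exists (fun i => (e' i - e i) / (l - l')) => w.
  have -> : gs g (fun i => (e' i - e i) / (l - l')) w = (gs g e' w - gs g e w) / (l - l').
    rewrite -gsB /gs mulr_suml; apply: eq_bigr => i _; by rewrite mulrAC.
  have E := H w.
  have -> : gs g e' w - gs g e w = (l - l') * G v0 w.
    have -> : gs g e' w = l * G v0 w + gs g e w - l' * G v0 w by rewrite E; ring.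
    ring.
  field; by rewrite subr_eq0.
pose P v l := exists e, forall w, G v w = l * G v0 w + gs g e w.
pose lamf v := epsilon (inhabits 0) (P v).
have lamP : forall v, P v (lamf v).
  by move=> v; apply: epsilon_spec; have [l [e He]] := rep v; exists l, e.
have lamU : forall v l, P v l -> lamf v = l.
  move=> v l [e He]; have [e' He'] := lamP v.
  by apply: (uniq _ _ e' e) => w; rewrite -He -He'.
have lam_lin : lfun lamf.
  move=> a x y; apply: lamU.
  have [e He] := lamP x; have [e' He'] := lamP y.
  exists (fun i => a * e i + e' i) => w.
  rewrite (hl w a x y) He He' gsD gsZ; ring.
have lam_PV : forall v, PV v -> lamf v = 0.
  move=> v Pv; apply: lamU; exists (fun _ => 0) => w.
  by rewrite hPV // gs0 mul0r addr0.
pose G' v w := G v w - lamf v * G v0 w.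
have := IH G'.
case.
- move=> w a x y; rewrite /G' (hl w a x y) lam_lin; ring.
- move=> v a x y; rewrite /G' (hr v a x y) (hr v0 a x y); ring.
- by move=> v Pv w; rewrite /G' hPV // lam_PV // mul0r subr0.
- by move=> w Pw v; rewrite /G' !hPW // mulr0 subr0.
- move=> v; have [e He] := lamP v; exists e => w.
  rewrite /G' He; ring.
move=> s [Hs Hsum].
exists ((lamf, G v0) :: s); split.
  move=> p /= [<-|Hp]; last exact: Hs.
  split => //= w Pw; exact: hPW.
move=> v w; rewrite big_cons /= -Hsum /G'; ring.
Qed.
End Decomp.
Section FD.
Variable k : fieldType.

Lemma fd_decomp (A B : algType k) (G : A -> B -> k) (IA : A -> Prop) (IB : B -> Prop) :
 ideal IA -> fincodim IA -> ideal IB -> fincodim IB ->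
 (forall b, lfun (fun a => G a b)) -> (forall a, lfun (G a)) ->
 (forall a, IA a -> forall b, G a b = 0) -> (forall b, IB b -> forall a, G a b = 0) ->
 exists s : seq ((A -> k^o) * (B -> k^o)),
   (forall p, List.In p s -> finite_dual p.1 /\ finite_dual p.2) /\
   forall a b, G a b = \sum_(p <- s) p.1 a * p.2 b.
Proof.
move=> iA fA iB fB hl hr hA hB; have [sA HsA] := fA.
have := @decomp k A B IA IB (map (fun x => G x) sA) G hl hr hA hB.
case.
  move=> a; have [c Hc] := HsA a; exists c => b.
  have E : G (a - \sum_(i < size sA) c i *: sA`_i) b = 0 by apply: hA.
  rewrite (lfunB (hl b)) (lfun_sum (hl b)) in E.
  move/eqP: E; rewrite subr_eq0 => /eqP ->.
  rewrite /gs size_map; apply: eq_bigr => i _.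
  by rewrite (lfunZ (hl b)) (nth_map 0) //.
move=> s [Hs Hsum]; exists s; split => // p Hp.
have [l1 v1 l2 v2] := Hs p Hp.
rewrite /finite_dual; split; split; first exact: l1.
- by exists IA; split.
- exact: l2.
- by exists IB; split.
Qed.

Lemma fd_comul_spec (A : algType k) (phi : A -> k^o) : finite_dual phi ->
  (forall p, List.In p (fd_comul phi) -> finite_dual p.1 /\ finite_dual p.2) /\
  forall a a', \sum_(p <- fd_comul phi) p.1 a * p.2 a' = phi (a * a').
Proof.
move=> [lp [I [iI fI vI]]].
rewrite /fd_comul.
apply: (@epsilon_spec _ (inhabits [::]) (fun s : seq ((A -> k^o) * (A -> k^o)) =>
  (forall p, List.In p s -> finite_dual p.1 /\ finite_dual p.2) /\
  forall a a', \sum_(p <- s) p.1 a * p.2 a' = phi (a * a'))).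
have := @fd_decomp A A (fun a a' => phi (a * a')) I I iI fI iI fI.
case.
- by move=> b c x y /=; rewrite mulrDl -scalerAl lp.
- by move=> a c x y /=; rewrite mulrDr -scalerAr lp.
- by move=> a Ia b; apply: vI; case: iI => _ H; case: (H b a Ia).
- by move=> b Ib a; apply: vI; case: iI => _ H; case: (H a b Ib).
move=> s [Hs Hsum]; exists s; split => // a a'; by rewrite Hsum.
Qed.
End FD.
Section Inj.
Variable k : fieldType.
Variables A B : algType k.
Local Notation CA := (A -> k^o).
Local Notation CB := (B -> k^o).

Lemma fsum_app (I : Type) (r : seq I) (F : I -> CB) b :
  (\sum_(i <- r) F i) b = \sum_(i <- r) F i b.
Proof. by rewrite fct_sumE. Qed.
Lemma fsum_appA (I : Type) (r : seq I) (F : I -> CA) a :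
  (\sum_(i <- r) F i) a = \sum_(i <- r) F i a.
Proof. by rewrite fct_sumE. Qed.

Lemma inj2 (I : Type) (X Y : seq I) (c : I -> k) (f : I -> CA) (g : I -> CB) :
 (forall a b, \sum_(x <- X) c x * (f x a * g x b) = \sum_(x <- Y) c x * (f x a * g x b)) ->
 forall l m, lfun l -> lfun m ->
   \sum_(x <- X) c x * (l (f x) * m (g x)) = \sum_(x <- Y) c x * (l (f x) * m (g x)).
Proof.
move=> H l m hl hm.
have H1 : forall a, \sum_(x <- X) c x * (f x a * m (g x)) = \sum_(x <- Y) c x * (f x a * m (g x)).
  move=> a.
  have E : \sum_(x <- X) (c x * f x a) *: g x = \sum_(x <- Y) (c x * f x a) *: g x.
    apply: funext => b; rewrite !fsum_app.
    have := H a b; rewrite (eq_bigr (fun x => (c x * f x a) * g x b)); last first.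
      by move=> x _; rewrite mulrA.
    move=> ->; apply: eq_bigr => x _; rewrite mulrA //.
  have := congr1 m E; rewrite !(lfun_sum hm).
  under eq_bigr => x _ do rewrite (lfunZ hm) -mulrA.
  by under [RHS]eq_bigr => x _ do rewrite (lfunZ hm) -mulrA.
have E : \sum_(x <- X) (c x * m (g x)) *: f x = \sum_(x <- Y) (c x * m (g x)) *: f x.
  apply: funext => a; rewrite !fsum_appA.
  have := H1 a.
  rewrite (eq_bigr (fun x => (c x * m (g x)) * f x a)); last first.
    by move=> x _; rewrite [f x a * _]mulrC mulrA.
  move=> ->; apply: eq_bigr => x _.
  by rewrite [f x a * _]mulrC mulrA.
have := congr1 l E; rewrite !(lfun_sum hl).
under eq_bigr => x _ do rewrite (lfunZ hl) -mulrA [m _ * _]mulrC.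
by under [RHS]eq_bigr => x _ do rewrite (lfunZ hl) -mulrA [m _ * _]mulrC.
Qed.

Definition d0 : (CA * CB)%type := (0, 0).

Lemma prod_zip_iota (L : nat -> CA -> k) (M : nat -> CB -> k) (x : seq (CA * CB)%type) m :
  \prod_(j <- zip (iota m (size x)) x) (L j.1 j.2.1 * M j.1 j.2.2) =
  \prod_(i < size x) (L (m + i)%N (nth d0 x i).1 * M (m + i)%N (nth d0 x i).2).
Proof.
elim: x m => [|y x IH] m; first by rewrite big_nil big_ord0.
rewrite /= big_cons big_ord_recl /= addn0 IH; congr (_ * _).
by apply: eq_bigr => i _; rewrite addSnnS.
Qed.

Definition prodv n (L : nat -> CA -> k) (M : nat -> CB -> k) (x : seq (CA * CB)%type) :=
  \prod_(i < n) (L i (nth d0 x i).1 * M i (nth d0 x i).2).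

Lemma tensn_val_prodv n L M (X : seq (seq (CA * CB)%type)) :
  all (fun x => size x == n) X ->
  tensn_val L M X = \sum_(x <- X) prodv n L M x.
Proof.
rewrite /tensn_val; elim: X => [|x X IH]; first by rewrite !big_nil.
move=> /= /andP [/eqP Hx HX]; rewrite !big_cons IH // prod_zip_iota.
by rewrite Hx.
Qed.

Lemma prodv_upd n L M x N (HN : (N < n)%N) :
  prodv n L M x = (\prod_(i < n | i != Ordinal HN) (L i (nth d0 x i).1 * M i (nth d0 x i).2))
    * (L N (nth d0 x N).1 * M N (nth d0 x N).2).
Proof. by rewrite /prodv (bigD1 (Ordinal HN)) //= mulrC. Qed.

Definition upd {T : Type} (F : nat -> T) (N : nat) (v : T) : nat -> T :=
  fun i => if i == N then v else F i.

Lemma tensn_inj n (X Y : seq (seq (CA * CB)%type)) :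
  all (fun x => size x == n) X -> all (fun x => size x == n) Y ->
  (forall (pa : nat -> A) (pb : nat -> B),
     tensn_val (fun i (f : CA) => f (pa i)) (fun i (g : CB) => g (pb i)) X =
     tensn_val (fun i (f : CA) => f (pa i)) (fun i (g : CB) => g (pb i)) Y) ->
  tensn_eq X Y.
Proof.
move=> sX sY H.
pose Q N := forall (pa : nat -> A) (pb : nat -> B) L M,
  (forall i, lfun (L i)) -> (forall i, lfun (M i)) ->
  (forall i, (N <= i)%N -> L i = (fun f : CA => f (pa i)) /\ M i = (fun g : CB => g (pb i))) ->
  \sum_(x <- X) prodv n L M x = \sum_(x <- Y) prodv n L M x.
have Q0 : Q 0%N.
  move=> pa pb L M _ _ HLM.
  have -> : L = (fun i (f : CA) => f (pa i)) by apply: funext => i; case: (HLM i).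
  have -> : M = (fun i (g : CB) => g (pb i)) by apply: funext => i; case: (HLM i).
  by rewrite -!tensn_val_prodv.
have QS : forall N, (N < n)%N -> Q N -> Q N.+1.
  move=> N HN QN pa pb L M hL hM HLM.
  pose c x := \prod_(i < n | i != Ordinal HN) (L i (nth d0 x i).1 * M i (nth d0 x i).2).
  have E : forall L' M', (forall i, i != N -> L' i = L i /\ M' i = M i) ->
      forall x, prodv n L' M' x = c x * (L' N (nth d0 x N).1 * M' N (nth d0 x N).2).
    move=> L' M' HL' x; rewrite (prodv_upd _ _ _ HN); congr (_ * _).
    apply: eq_bigr => i Hi.
    have Hi' : (i : nat) != N.
      by apply: contra Hi => /eqP Hi; apply/eqP; apply: val_inj.
    by have [-> ->] := HL' i Hi'.
  under eq_bigr => x _ do rewrite (E L M) //.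
  under [RHS]eq_bigr => x _ do rewrite (E L M) //.
  suff Hab : forall a b,
      \sum_(x <- X) c x * ((nth d0 x N).1 a * (nth d0 x N).2 b) =
      \sum_(x <- Y) c x * ((nth d0 x N).1 a * (nth d0 x N).2 b).
    exact: (@inj2 _ X Y c (fun x => (nth d0 x N).1) (fun x => (nth d0 x N).2) Hab _ _ (hL N) (hM N)).
  move=> a b.
  have H1 : forall i, lfun (upd L N (fun f : CA => f a) i).
    by move=> i; rewrite /upd; case: ifP.
  have H2 : forall i, lfun (upd M N (fun g : CB => g b) i).
    by move=> i; rewrite /upd; case: ifP.
  have H3 : forall i, (N <= i)%N -> upd L N (fun f : CA => f a) i = (fun f : CA => f (upd pa N a i))
      /\ upd M N (fun g : CB => g b) i = (fun g : CB => g (upd pb N b i)).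
    move=> i Hi; rewrite /upd; case: eqP => // Hne.
    by apply: HLM; rewrite ltn_neqAle Hi andbT eq_sym; apply/eqP.
  have := QN (upd pa N a) (upd pb N b) _ _ H1 H2 H3.
  have E' := E (upd L N (fun f : CA => f a)) (upd M N (fun g : CB => g b)).
  have hE : forall i : nat, i != N -> upd L N (fun f : CA => f a) i = L i /\
      upd M N (fun g : CB => g b) i = M i.
    by move=> i Hi; rewrite /upd (negbTE Hi).
  have E'' := E' hE.
  under eq_bigr => x _ do rewrite E''.
  under [in X in _ = X -> _]eq_bigr => x _ do rewrite E''.
  by rewrite /upd eqxx.
have Qn : forall N, (N <= n)%N -> Q N.
  elim => [|N IH] HN; first exact: Q0.
  by apply: QS => //; apply: IH; apply: ltnW.
move=> l m hl hm.
pose L i := if (i < n)%N then l i else (fun f : CA => f 0).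
pose M i := if (i < n)%N then m i else (fun g : CB => g 0).
have eL : forall x, prodv n L M x = prodv n l m x.
  by move=> x; apply: eq_bigr => i _; rewrite /L /M ltn_ord.
rewrite (tensn_val_prodv _ _ sX) (tensn_val_prodv _ _ sY).
rewrite -!(eq_bigr _ (fun x _ => eL x)).
apply: (Qn n (leqnn n) (fun _ => 0) (fun _ => 0)).
- by move=> i; rewrite /L; case: ifP.
- by move=> i; rewrite /M; case: ifP.
- by move=> i Hi; rewrite /L /M ltnNge Hi.
Qed.
End Inj.
Section Main.
Variable k : fieldType.
Variables A B : algType k.
Variable t : B -> A -> seq (A * B)%type.
Hypothesis tw : twisting_map t.
Hypothesis tc : tau_continuous t.
Local Notation CA := (A -> k^o).
Local Notation CB := (B -> k^o).

Lemma lfun_mull (V : algType k) (x : V) (l : V -> k) : lfun l -> lfun (fun a => l (x * a)).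
Proof. by move=> hl c a b; rewrite mulrDr -scalerAr hl. Qed.
Lemma lfun_mulr (V : algType k) (y : V) (l : V -> k) : lfun l -> lfun (fun a => l (a * y)).
Proof. by move=> hl c a b; rewrite mulrDl -scalerAl hl. Qed.

Lemma tval_map (V W V' W' : lmodType k) (f : V -> V') (g : W -> W') l m X :
  tval l m (map (fun q => (f q.1, g q.2)) X) = tval (fun v => l (f v)) (fun w => m (g w)) X.
Proof. by rewrite /tval big_map. Qed.

Lemma mtau11 x y : mtau t [:: x] [:: y] = [seq (x.1 * q.1, q.2 * y.2) | q <- t x.2 y.1].
Proof. by rewrite /mtau /= !cats0. Qed.

Lemma t1a a : tens_eq (t 1 a) [:: (a, 1)].
Proof.
case: tw => _ _ H _; have := H [:: (a, 1)]; rewrite mtau11 /=.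
have -> : [seq (1 * q.1, q.2 * 1) | q <- t 1 a] = t 1 a.
  by rewrite -[RHS]map_id; apply: eq_map => -[x y]; rewrite /= mul1r mulr1.
by [].
Qed.

Lemma tb1 b : tens_eq (t b 1) [:: (1, b)].
Proof.
case: tw => _ _ _ H; have := H [:: (1, b)]; rewrite mtau11 /=.
have -> : [seq (1 * q.1, q.2 * 1) | q <- t b 1] = t b 1.
  by rewrite -[RHS]map_id; apply: eq_map => -[x y]; rewrite /= mul1r mulr1.
by [].
Qed.

Lemma tval_mtau (l : A -> k) (m : B -> k) X Y :
  tval l m (mtau t X Y) =
  \sum_(x <- X) \sum_(y <- Y) \sum_(q <- t x.2 y.1) l (x.1 * q.1) * m (q.2 * y.2).
Proof.
rewrite /tval /mtau big_flatten /= big_map; apply: eq_bigr => x _.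
rewrite big_flatten /= big_map; apply: eq_bigr => y _.
by rewrite big_map.
Qed.

Definition tauo_spec (phi : CA) (psi : CB) (s : seq (CB * CA)%type) : Prop :=
  (forall r, List.In r s -> finite_dual r.1 /\ finite_dual r.2) /\
  forall b a, \sum_(r <- s) r.1 b * r.2 a = \sum_(q <- t b a) phi q.1 * psi q.2.

Definition tauo (phi : CA) (psi : CB) : seq (CB * CA)%type :=
  epsilon (inhabits [::]) (tauo_spec phi psi).

Lemma tauo_ok phi psi : finite_dual phi -> finite_dual psi ->
  tauo_spec phi psi (tauo phi psi).
Proof.
move=> fphi fpsi; rewrite /tauo; apply: epsilon_spec.
have [lp [Ip [iIp fIp vIp]]] := fphi.
have [lq [Iq [iIq fIq vIq]]] := fpsi.
pose U := fun X : seq (A * B)%type => tval phi psi X = 0.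
have oU : tbang_open U.
  split.
    split; rewrite /U.
    - by rewrite tval_nil.
    - by move=> X Y; rewrite tval_cat => -> ->; rewrite addr0.
    - by move=> c X; rewrite tval_scale // => ->; rewrite mulr0.
    - by move=> X Y /tens_eqP E; rewrite -E.
  exists Ip, Iq; split.
  - split; first exact: ideal_subspace.
    by exists Ip; split.
  - split; first exact: ideal_subspace.
    by exists Iq; split.
  - by move=> a b Ia; rewrite /U tval_cons tval_nil vIp // mul0r addr0.
  - by move=> a b Ib; rewrite /U tval_cons tval_nil vIq // mulr0 addr0.
have [_ [B0 [A0 [[_ [JB [iJB fJB sJB]]] [_ [JA [iJA fJA sJA]]] hB hA]]]] := tc oU.
have := @fd_decomp k B A (fun b a => tval phi psi (t b a)) JB JA iJB fJB iJA fJA.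
case.
- move=> a c b b' /=; case: tw => [[H1 H2] _ _ _].
  by have /tens_eqP -> := H1 c b b' a; rewrite // tval_cat tval_scale.
- move=> b c a a' /=; case: tw => [[H1 H2] _ _ _].
  by have /tens_eqP -> := H2 c b a a'; rewrite // tval_cat tval_scale.
- move=> b Jb a; have := hB b a (sJB _ Jb).
  by rewrite /U /tau_ext /= cats0.
- move=> a Ja b; have := hA b a (sJA _ Ja).
  by rewrite /U /tau_ext /= cats0.
move=> s [Hs Hsum]; exists s; split => // b a.
by rewrite -Hsum.
Qed.

Lemma is_dual_tauo : is_dual_of t tauo.
Proof. by move=> phi psi fp fq b a; case: (tauo_ok fp fq) => _ ->. Qed.

Lemma eq_bigIn (I : Type) (s : seq I) (F G : I -> k) :
  (forall x, List.In x s -> F x = G x) -> \sum_(x <- s) F x = \sum_(x <- s) G x.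
Proof.
elim: s => [|y s IH] H; first by rewrite !big_nil.
rewrite !big_cons H /=; last by left.
by rewrite IH // => x Hx; apply: H; right.
Qed.

Lemma tform_mtau (F : A -> B -> k) X Y :
  tform F (mtau t X Y) =
  \sum_(x <- X) \sum_(y <- Y) \sum_(q <- t x.2 y.1) F (x.1 * q.1) (q.2 * y.2).
Proof.
rewrite /tform /mtau big_flatten /= big_map; apply: eq_bigr => x _.
rewrite big_flatten /= big_map; apply: eq_bigr => y _.
by rewrite big_map.
Qed.

Lemma K (Y : seq (CA * CB)%type) : in_CD Y -> forall a b a' b',
  \sum_(w <- cotw_comul tauo Y)
     (((nth (0, 0) w 0).1 a * (nth (0, 0) w 0).2 b) *
      ((nth (0, 0) w 1).1 a' * (nth (0, 0) w 1).2 b'))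
  = \sum_(q <- t b a') cd_form Y (a * q.1) (q.2 * b').
Proof.
move=> HY a b a' b'.
rewrite /cotw_comul big_flatten /= big_map.
under [RHS]eq_bigr => q _ do rewrite /cd_form.
rewrite exchange_big /=.
apply: eq_bigIn => z Hz.
have [fz1 fz2] := HY z Hz.
have [S1 E1] := fd_comul_spec fz1.
have [S2 E2] := fd_comul_spec fz2.
rewrite big_flatten /= big_map.
under [RHS]eq_bigr => q _ do rewrite -E1 -E2 big_distrl /=.
rewrite exchange_big /=.
apply: eq_bigIn => p Hp.
rewrite big_flatten /= big_map.
under [RHS]eq_bigr => q _ do rewrite big_distrr /=.
rewrite exchange_big /=.
apply: eq_bigIn => q Hq.
have [_ fp2] := S1 p Hp; have [fq1 _] := S2 q Hq.
have [_ Et] := tauo_ok fp2 fq1.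
rewrite big_map (eq_bigr (fun r => (p.1 a * q.2 b') * (r.1 b * r.2 a'))); last first.
  by move=> r _ /=; ring.
rewrite -big_distrr /= Et big_distrr /=.
by apply: eq_bigr => s _; ring.
Qed.
Lemma In_flatten_map (I T : Type) (F : I -> seq T) (s : seq I) x :
  List.In x (flatten (map F s)) -> exists y, List.In y s /\ List.In x (F y).
Proof.
elim: s => [|y s IH] //= Hx; case: (List.in_app_or _ _ _ Hx) => H; first by exists y; split => //; left.
by have [z [Hz Hz2]] := IH H; exists z; split => //; right.
Qed.

Lemma In_map (I T : Type) (f : I -> T) (s : seq I) x :
  List.In x (map f s) -> exists y, List.In y s /\ x = f y.
Proof.
elim: s => [|y s IH] //= [H|H]; first by exists y; split => //; left.
by have [z [Hz Hz2]] := IH H; exists z; split => //; right.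
Qed.

Lemma all_In (T : Type) (p : pred T) (s : seq T) :
  (forall x, List.In x s -> p x) -> all p s.
Proof.
elim: s => [|y s IH] H //=; apply/andP; split; first by apply: H; left.
by apply: IH => x Hx; apply: H; right.
Qed.

Lemma cotw_In Z w : in_CD Z -> List.In w (cotw_comul tauo Z) ->
  exists u v, w = [:: u; v] /\ finite_dual u.1 /\ finite_dual u.2 /\
              finite_dual v.1 /\ finite_dual v.2.
Proof.
move=> HZ; rewrite /cotw_comul.
move=> H0; have [z [Hz H1]] := In_flatten_map H0.
have [p [Hp H2]] := In_flatten_map H1.
have [q [Hq H3]] := In_flatten_map H2.
have [r [Hr ->]] := In_map H3.
have [fz1 fz2] := HZ z Hz.
have [S1 _] := fd_comul_spec fz1; have [S2 _] := fd_comul_spec fz2.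
have [fp1 fp2] := S1 p Hp; have [fq1 fq2] := S2 q Hq.
have [Sr _] := tauo_ok fp2 fq1; have [fr1 fr2] := Sr r Hr.
by exists (p.1, r.1), (r.2, q.2).
Qed.

Definition ev (p : (CA * CB)%type) (x : (A * B)%type) : k := p.1 x.1 * p.2 x.2.

Lemma tform_cd (Z : seq (CA * CB)%type) (X : seq (A * B)%type) : tform (cd_form Z) X = \sum_(z <- Z) tval z.1 z.2 X.
Proof. by rewrite /tform /cd_form /tval exchange_big. Qed.

Lemma tform_cd_eq (Z : seq (CA * CB)%type) (X Y : seq (A * B)%type) : in_CD Z -> tens_eq X Y -> tform (cd_form Z) X = tform (cd_form Z) Y.
Proof.
move=> HZ /tens_eqP E; rewrite !tform_cd; apply: eq_bigIn => z Hz.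
by have [[l1 _] [l2 _]] := HZ z Hz; apply: E.
Qed.

Lemma Kpt Y : in_CD Y -> forall u v,
  \sum_(w <- cotw_comul tauo Y) ev (nth (0, 0) w 0) u * ev (nth (0, 0) w 1) v
  = tform (cd_form Y) (mtau t [:: u] [:: v]).
Proof.
move=> HY [a b] [a' b']; rewrite /ev K // tform_mtau /= !big_seq1.
by [].
Qed.

Lemma tform_mtau_l (F : A -> B -> k) (X Y : seq (A * B)%type) : tform F (mtau t X Y) = \sum_(x <- X) tform F (mtau t [:: x] Y).
Proof. by rewrite tform_mtau; apply: eq_bigr => x _; rewrite tform_mtau big_seq1. Qed.
Lemma tform_mtau_r (F : A -> B -> k) (x : (A * B)%type) (Y : seq (A * B)%type) : tform F (mtau t [:: x] Y) = \sum_(y <- Y) tform F (mtau t [:: x] [:: y]).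
Proof. by rewrite tform_mtau big_seq1; apply: eq_bigr => y _; rewrite tform_mtau !big_seq1. Qed.

Lemma tens_eq_pt2 (X Y : seq (CA * CB)%type) :
  (forall a b, \sum_(r <- X) r.1 a * r.2 b = \sum_(r <- Y) r.1 a * r.2 b) -> tens_eq X Y.
Proof.
move=> H; apply: (tensn_inj (n := 1)).
- by apply: all_In => x Hx; have [y [_ ->]] := In_map Hx.
- by apply: all_In => x Hx; have [y [_ ->]] := In_map Hx.
move=> pa pb; rewrite !tensn_val_single /tval; exact: H.
Qed.

Lemma tens_eq_pt1 (X Y : seq (CB * CA)%type) :
  (forall a b, \sum_(r <- X) r.1 a * r.2 b = \sum_(r <- Y) r.1 a * r.2 b) -> tens_eq X Y.
Proof.
move=> H; apply: (tensn_inj (n := 1)).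
- by apply: all_In => x Hx; have [y [_ ->]] := In_map Hx.
- by apply: all_In => x Hx; have [y [_ ->]] := In_map Hx.
move=> pa pb; rewrite !tensn_val_single /tval; exact: H.
Qed.
Lemma fscaleA (c : k) (f : CA) a : (c *: f) a = c * f a.
Proof. by []. Qed.

Lemma inCD1 (u : (CA * CB)%type) : finite_dual u.1 -> finite_dual u.2 -> in_CD [:: u].
Proof. by move=> h1 h2 z [<-|[]]. Qed.

Lemma tform_cd1 (u : (CA * CB)%type) (X : seq (A * B)%type) : tform (cd_form [:: u]) X = \sum_(x <- X) ev u x.
Proof. by rewrite /tform /cd_form; apply: eq_bigr => x _; rewrite big_seq1. Qed.

Lemma prod3 (l : nat -> CA -> k) (m : nat -> CB -> k) a0 a1 a2 :
  \prod_(j <- zip (iota 0 (size [:: a0; a1; a2])) [:: a0; a1; a2]) (l j.1 j.2.1 * m j.1 j.2.2)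
  = (l 0%N a0.1 * m 0%N a0.2) * ((l 1%N a1.1 * m 1%N a1.2) * (l 2%N a2.1 * m 2%N a2.2)).
Proof. by rewrite /= !big_cons big_nil mulr1. Qed.

Lemma cotw_size (Z : seq (CA * CB)%type) : in_CD Z -> all (fun x => size x == 3)
  (flatten [seq [seq w ++ behead x | w <- cotw_comul tauo (take 1 x)] | x <- cotw_comul tauo Z]).
Proof.
move=> HZ; apply: all_In => y Hy.
have [x [Hx Hy']] := In_flatten_map Hy; have [w [Hw ->]] := In_map Hy'.
have [u [v [Ex [fu1 [fu2 _]]]]] := cotw_In HZ Hx; rewrite Ex in Hw *.
by have [u' [v' [-> _]]] := cotw_In (inCD1 fu1 fu2) Hw.
Qed.

Lemma cotw_size' (Z : seq (CA * CB)%type) : in_CD Z -> all (fun x => size x == 3)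
  (flatten [seq [seq take 1 x ++ w | w <- cotw_comul tauo (behead x)] | x <- cotw_comul tauo Z]).
Proof.
move=> HZ; apply: all_In => y Hy.
have [x [Hx Hy']] := In_flatten_map Hy; have [w [Hw ->]] := In_map Hy'.
have [u [v [Ex [_ [_ [fv1 fv2]]]]]] := cotw_In HZ Hx; rewrite Ex in Hw *.
by have [u' [v' [-> _]]] := cotw_In (inCD1 fv1 fv2) Hw.
Qed.

Lemma cotw_ok : cotwisting_map tauo.
Proof.
case: tw => _ Hassoc Hul Hur.
split.
- by move=> phi psi fp fq r Hr; case: (tauo_ok fp fq) => S _; apply: S.
- move=> c phi phi' psi fp fp' fq; apply: tens_eq_pt1 => b a.
  have [_ E] := tauo_ok (finite_dual_lin c fp fp') fq.
  have [_ E1] := tauo_ok fp fq; have [_ E2] := tauo_ok fp' fq.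
  rewrite E big_cat /= big_map.
  rewrite (eq_bigr (fun r => c * (r.1 b * r.2 a))); last by move=> r _; rewrite mulrA.
  rewrite -big_distrr /= E1 E2 big_distrr -big_split /=.
  by apply: eq_bigr => q _; rewrite mulrA -mulrDl.
- move=> c phi psi psi' fp fq fq'; apply: tens_eq_pt1 => b a.
  have [_ E] := tauo_ok fp (finite_dual_lin c fq fq').
  have [_ E1] := tauo_ok fp fq; have [_ E2] := tauo_ok fp fq'.
  rewrite E big_cat /= big_map.
  rewrite (eq_bigr (fun r => c * (r.1 b * r.2 a))); last by move=> r _; rewrite mulrA.
  rewrite -big_distrr /= E1 E2 big_distrr -big_split /=.
  apply: eq_bigr => q _.
  change (phi q.1 * (c * psi q.2 + psi' q.2) = c * (phi q.1 * psi q.2) + phi q.1 * psi' q.2).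
  ring.
- move=> Z HZ; apply: (tensn_inj (n := 3)); [exact: cotw_size | exact: cotw_size' |].
  move=> pa pb.
  pose p i := (pa i, pb i).
  have L : tensn_val (fun i (f : CA) => f (pa i)) (fun i (g : CB) => g (pb i))
     (flatten [seq [seq w ++ behead x | w <- cotw_comul tauo (take 1 x)] | x <- cotw_comul tauo Z])
     = tform (cd_form Z) (mtau t (mtau t [:: p 0%N] [:: p 1%N]) [:: p 2%N]).
    rewrite /tensn_val big_flatten /= big_map.
    rewrite tform_mtau_l.
    transitivity (\sum_(x <- cotw_comul tauo Z)
       (\sum_(u <- mtau t [:: p 0%N] [:: p 1%N]) ev (nth (0, 0) x 0) u) * ev (nth (0, 0) x 1) (p 2%N)).
      apply: eq_bigIn => x Hx.
      have [u [v [Ex [fu1 [fu2 _]]]]] := cotw_In HZ Hx; rewrite Ex /=.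
      rewrite -tform_cd1 -Kpt; last exact: inCD1.
      rewrite big_map big_distrl /=; apply: eq_bigIn => w Hw.
      have [u' [v' [Ew _]]] := cotw_In (inCD1 fu1 fu2) Hw; rewrite Ew /=.
      rewrite !big_cons big_nil /ev /=; ring.
    under eq_bigr => x _ do rewrite big_distrl /=.
    rewrite exchange_big /=; apply: eq_bigr => u _.
    by rewrite -Kpt.
  have R : tensn_val (fun i (f : CA) => f (pa i)) (fun i (g : CB) => g (pb i))
     (flatten [seq [seq take 1 x ++ w | w <- cotw_comul tauo (behead x)] | x <- cotw_comul tauo Z])
     = tform (cd_form Z) (mtau t [:: p 0%N] (mtau t [:: p 1%N] [:: p 2%N])).
    rewrite /tensn_val big_flatten /= big_map.
    rewrite tform_mtau_r.
    transitivity (\sum_(x <- cotw_comul tauo Z)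
       ev (nth (0, 0) x 0) (p 0%N) * (\sum_(u <- mtau t [:: p 1%N] [:: p 2%N]) ev (nth (0, 0) x 1) u)).
      apply: eq_bigIn => x Hx.
      have [u [v [Ex [_ [_ [fv1 fv2]]]]]] := cotw_In HZ Hx; rewrite Ex /=.
      rewrite -tform_cd1 -Kpt; last exact: inCD1.
      rewrite big_map big_distrr /=; apply: eq_bigIn => w Hw.
      have [u' [v' [Ew _]]] := cotw_In (inCD1 fv1 fv2) Hw; rewrite Ew /=.
      rewrite !big_cons big_nil /ev /=; ring.
    under eq_bigr => x _ do rewrite big_distrr /=.
    rewrite exchange_big /=; apply: eq_bigr => u _.
    by rewrite -Kpt.
  by rewrite L R; apply: tform_cd_eq.
- move=> Z HZ; split; apply: tens_eq_pt2 => a b; rewrite big_map /=.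
  + transitivity (\sum_(w <- cotw_comul tauo Z) ev (nth (0, 0) w 0) (1, 1) * ev (nth (0, 0) w 1) (a, b)).
      by apply: eq_bigr => w _; rewrite fscaleA /ev /cd_counit /=; ring.
    rewrite Kpt // (tform_cd_eq HZ (Hul _)) /tform big_seq1 /=.
    by [].
  + transitivity (\sum_(w <- cotw_comul tauo Z) ev (nth (0, 0) w 0) (a, b) * ev (nth (0, 0) w 1) (1, 1)).
      by apply: eq_bigr => w _; rewrite fscaleA /ev /cd_counit /=; ring.
    rewrite Kpt // (tform_cd_eq HZ (Hur _)) /tform big_seq1 /=.
    by [].
Qed.
Lemma Klist (Z : seq (CA * CB)%type) : in_CD Z -> forall X Y : seq (A * B)%type,
  tform (cd_form Z) (mtau t X Y) =
  \sum_(w <- cotw_comul tauo Z) tval (nth (0, 0) w 0).1 (nth (0, 0) w 0).2 X *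
                                tval (nth (0, 0) w 1).1 (nth (0, 0) w 1).2 Y.
Proof.
move=> HZ X Y; rewrite tform_mtau_l.
under [RHS]eq_bigr => w _ do rewrite /tval big_distrl /=.
rewrite exchange_big /=; apply: eq_bigr => x _.
rewrite tform_mtau_r.
under [RHS]eq_bigr => w _ do rewrite big_distrr /=.
rewrite exchange_big /=; apply: eq_bigr => y _.
by rewrite -Kpt.
Qed.

Lemma RespL (Z : seq (CA * CB)%type) (W W' V : seq (A * B)%type) : in_CD Z -> tens_eq W W' ->
  tform (cd_form Z) (mtau t W V) = tform (cd_form Z) (mtau t W' V).
Proof.
move=> HZ /tens_eqP E; rewrite !Klist //; apply: eq_bigIn => w Hw.
have [u [v [-> [[l1 _] [[l2 _] _]]]]] := cotw_In HZ Hw.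
by rewrite /= E.
Qed.

Lemma Expand (Z : seq (CA * CB)%type) : in_CD Z -> forall U X V : seq (A * B)%type,
  tform (cd_form Z) (mtau t (mtau t U X) V) =
  \sum_(w <- cotw_comul tauo Z) tval (nth (0, 0) w 1).1 (nth (0, 0) w 1).2 V *
     \sum_(w' <- cotw_comul tauo [:: nth (0, 0) w 0])
        tval (nth (0, 0) w' 0).1 (nth (0, 0) w' 0).2 U *
        tval (nth (0, 0) w' 1).1 (nth (0, 0) w' 1).2 X.
Proof.
move=> HZ U X V; rewrite Klist //; apply: eq_bigIn => w Hw.
have [u [v [-> [fu1 [fu2 _]]]]] := cotw_In HZ Hw.
rewrite /= mulrC; congr (_ * _).
by rewrite -Klist ?tform_cd1 //; apply: inCD1.
Qed.

Lemma forms_fin (E : seq (CA * CB)%type) :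
  (forall e, List.In e E -> lfun e.1 /\ lfun e.2) ->
  exists S : seq (seq (A * B)%type), forall X, exists c : nat -> k,
    forall e, List.In e E -> tval e.1 e.2 (tsub X (tspan S c)) = 0.
Proof.
elim: E => [|e0 E IH] HE.
  by exists [::] => X; exists (fun _ => 0).
have [l01 l02] := HE e0 (or_introl erefl).
have [S' HS'] := IH (fun e He => HE e (or_intror He)).
case: (classic (exists X0, (forall e, List.In e E -> tval e.1 e.2 X0 = 0) /\
                           tval e0.1 e0.2 X0 != 0)).
  move=> [X0 [K0 n0]].
  exists (X0 :: S') => X.
  have [c Hc] := HS' X.
  pose mu := tval e0.1 e0.2 (tsub X (tspan S' c)) / tval e0.1 e0.2 X0.
  exists (shiftc mu c) => e He.
  have [le1 le2] := HE e He.
  have -> : tval e.1 e.2 (tsub X (tspan (X0 :: S') (shiftc mu c))) =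
            tval e.1 e.2 (tsub X (tspan S' c)) - mu * tval e.1 e.2 X0.
    rewrite !tval_tsub // !tval_tspan // /= big_ord_recl /=.
    rewrite opprD addrA addrAC; congr (_ - _).
  case: He => [<-|He].
    by rewrite /mu divfK // subrr.
  by rewrite Hc // K0 // mulr0 subr0.
move=> Hno; exists S' => X; have [c Hc] := HS' X; exists c => e [<-|He]; last exact: Hc.
apply: contra_notP Hno => Hn; exists (tsub X (tspan S' c)); split => //.
by apply/eqP.
Qed.
Lemma In_flatten_map_intro (I T : Type) (F : I -> seq T) (s : seq I) x y :
  List.In y s -> List.In x (F y) -> List.In x (flatten (map F s)).
Proof.
elim: s => [|z s IH] //= [->|Hy] Hx; apply: List.in_or_app; first by left.
by right; apply: IH.
Qed.

Lemma In_map_intro (I T : Type) (f : I -> T) (s : seq I) y :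
  List.In y s -> List.In (f y) (map f s).
Proof. by elim: s => [|z s IH] //= [->|Hy]; [left | right; apply: IH]. Qed.

Lemma lin_sum (L : seq (k * (CA * CB))%type) :
  (forall p, List.In p L -> lfun p.2.1 /\ lfun p.2.2) ->
  [/\ \sum_(p <- L) p.1 * tval p.2.1 p.2.2 [::] = 0,
      forall X Y, \sum_(p <- L) p.1 * tval p.2.1 p.2.2 (X ++ Y) =
                  \sum_(p <- L) p.1 * tval p.2.1 p.2.2 X + \sum_(p <- L) p.1 * tval p.2.1 p.2.2 Y,
      forall c X, \sum_(p <- L) p.1 * tval p.2.1 p.2.2 (tscale c X) =
                  c * \sum_(p <- L) p.1 * tval p.2.1 p.2.2 X &
      forall X Y, tens_eq X Y -> \sum_(p <- L) p.1 * tval p.2.1 p.2.2 X =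
                                 \sum_(p <- L) p.1 * tval p.2.1 p.2.2 Y].
Proof.
move=> HL; split.
- by rewrite big1 // => p _; rewrite tval_nil mulr0.
- by move=> X Y; rewrite -big_split; apply: eq_bigr => p _; rewrite tval_cat mulrDr.
- move=> c X; rewrite big_distrr; apply: eq_bigIn => p Hp.
  by have [l1 _] := HL p Hp; rewrite tval_scale // mulrCA.
- move=> X Y /tens_eqP E; apply: eq_bigIn => p Hp.
  by have [l1 l2] := HL p Hp; rewrite E.
Qed.

Lemma cd_twisted (Z : seq (CA * CB)%type) : in_CD Z -> twisted_finite_dual t (cd_form Z).
Proof.
move=> HZ.
case: tw => _ Hassoc Hul Hur.
split.
  split.
    move=> b c x y; rewrite /cd_form big_distrr -big_split; apply: eq_bigIn => z Hz.
    by have [[l1 _] [l2 _]] := HZ z Hz; rewrite /= l1 mulrDl mulrA.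
  move=> a c x y; rewrite /cd_form big_distrr -big_split; apply: eq_bigIn => z Hz.
  by have [[l1 _] [l2 _]] := HZ z Hz; rewrite /= l2 mulrDr !mulrA [c * _]mulrC.
pose E := flatten [seq [seq nth (0, 0) w' 1 | w' <- cotw_comul tauo [:: nth (0, 0) w 0]]
                    | w <- cotw_comul tauo Z].
have FF : forall U V, exists L : seq (k * (CA * CB))%type,
   [/\ forall p, List.In p L -> lfun p.2.1 /\ lfun p.2.2,
       forall p, List.In p L -> List.In p.2 E &
       forall X, tform (cd_form Z) (mtau t (mtau t U X) V) =
                 \sum_(p <- L) p.1 * tval p.2.1 p.2.2 X].
  move=> U V.
  exists (flatten [seq [seq (tval (nth (0, 0) w 1).1 (nth (0, 0) w 1).2 V *
                              tval (nth (0, 0) w' 0).1 (nth (0, 0) w' 0).2 U, nth (0, 0) w' 1)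
                        | w' <- cotw_comul tauo [:: nth (0, 0) w 0]] | w <- cotw_comul tauo Z]).
  split.
  - move=> p Hp; have [w [Hw Hp']] := In_flatten_map Hp; have [w' [Hw' ->]] := In_map Hp'.
    have [u [v [Ew [fu1 [fu2 _]]]]] := cotw_In HZ Hw; rewrite Ew /= in Hw' *.
    have [u' [v' [-> [_ [_ [[l1 _] [l2 _]]]]]]] := cotw_In (inCD1 fu1 fu2) Hw'.
    by [].
  - move=> p Hp; have [w [Hw Hp']] := In_flatten_map Hp; have [w' [Hw' ->]] := In_map Hp'.
    apply: (In_flatten_map_intro Hw); exact: (In_map_intro _ Hw').
  - move=> X; rewrite Expand // [RHS]big_flatten /= [RHS]big_map; apply: eq_bigr => w _.
    by rewrite big_map big_distrr /=; apply: eq_bigr => w' _; rewrite mulrA.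
have HE : forall e, List.In e E -> lfun e.1 /\ lfun e.2.
  move=> e He; have [w [Hw He']] := In_flatten_map He; have [w' [Hw' ->]] := In_map He'.
  have [u [v [Ew [fu1 [fu2 _]]]]] := cotw_In HZ Hw; rewrite Ew /= in Hw' *.
  have [u' [v' [-> [_ [_ [[l1 _] [l2 _]]]]]]] := cotw_In (inCD1 fu1 fu2) Hw'.
  by [].
have [S HS] := forms_fin HE.
pose I X := forall U V, tform (cd_form Z) (mtau t (mtau t U X) V) = 0.
have KI : forall X, (forall e, List.In e E -> tval e.1 e.2 X = 0) -> I X.
  move=> X HX U V; have [L [L1 L2 ->]] := FF U V.
  rewrite (@eq_bigIn _ L _ (fun _ => 0)); first by rewrite big1.
  by move=> p Hp; rewrite HX ?mulr0 //; apply: L2.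
exists I; split.
- split.
    split.
    + move=> U V; have [L [L1 _ ->]] := FF U V; by case: (lin_sum L1).
    + move=> X Y HX HY U V; have [L [L1 _ EL]] := FF U V.
      have := HX U V; have := HY U V; rewrite !EL; case: (lin_sum L1) => _ -> _ _ -> ->.
      by rewrite addr0.
    + move=> c X HX U V; have [L [L1 _ EL]] := FF U V.
      have := HX U V; rewrite !EL; case: (lin_sum L1) => _ _ -> _ ->.
      by rewrite mulr0.
    + move=> X Y Exy HX U V; have [L [L1 _ EL]] := FF U V.
      have := HX U V; rewrite !EL; case: (lin_sum L1) => _ _ _ H4.
      by rewrite (H4 _ _ Exy).
  move=> X Y HY; split => U V.
    rewrite (RespL _ HZ (tens_eq_sym (Hassoc U X Y))); exact: HY.
  rewrite (RespL _ HZ (tens_eq_sym (Hassoc U Y X))).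
  rewrite (tform_cd_eq HZ (Hassoc _ X V)); exact: HY.
- by exists S => X; have [c Hc] := HS X; exists c; apply: KI.
- move=> X HX; have := HX [:: (1, 1)] [:: (1, 1)].
  by rewrite (RespL _ HZ (Hul X)) (tform_cd_eq HZ (Hur X)).
Qed.
Lemma tens_eq_map1 (f : A -> A) (g : B -> B) (X : seq (A * B)%type) a b :
  (forall l : A -> k, lfun l -> lfun (fun x => l (f x))) ->
  (forall m : B -> k, lfun m -> lfun (fun x => m (g x))) ->
  tens_eq X [:: (a, b)] -> tens_eq (map (fun q => (f q.1, g q.2)) X) [:: (f a, g b)].
Proof.
move=> hf hg /tens_eqP E; apply/tens_eqP => l m hl hm.
by rewrite tval_map (E _ _ (hf l hl) (hg m hm)) !tval_cons !tval_nil.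
Qed.

Lemma tspan_ext (S : seq (seq (A * B)%type)) c d :
  (forall i, (i < size S)%N -> c i = d i) -> tspan S c = tspan S d.
Proof.
move=> E; rewrite /tspan; congr flatten; apply/eq_in_map => i.
by rewrite mem_iota add0n => /andP [_ Hi]; rewrite E.
Qed.

Lemma fincodim_emb (V : lmodType k) (emb : V -> seq (A * B)%type) (I : seq (A * B)%type -> Prop) :
  tsubspace I -> tfincodim I ->
  (forall c x y, tens_eq (emb (c *: x + y)) (tscale c (emb x) ++ emb y)) ->
  subspace (fun x => I (emb x)) /\ fincodim (fun x => I (emb x)).
Proof.
move=> [I0 Icat Isc Ieq] [S HS] Hemb.
have Hval : forall l m, lfun l -> lfun m -> forall c x y,
    tval l m (emb (c *: x + y)) = c * tval l m (emb x) + tval l m (emb y).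
  by move=> l m hl hm c x y; have /tens_eqP -> := Hemb c x y; rewrite // tval_cat tval_scale.
have Lin : forall c x y, I (emb x) -> I (emb y) -> I (emb (c *: x + y)).
  move=> c x y Hx Hy; apply: (Ieq (tscale c (emb x) ++ emb y)); last by apply: Icat => //; apply: Isc.
  exact: tens_eq_sym.
split.
  split => //; apply: (Ieq [::]) => //; apply/tens_eqP => l m hl hm.
  have := Hval l m hl hm 1 0 0; rewrite scale1r addr0 mul1r tval_nil.
  by move=> H; apply: (addrI (tval l m (emb 0))); rewrite addr0 -H.
pose R x c := I (tsub (emb x) (tspan S c)).
have := @fc_gen k V (size S) (fun _ => True) R _ (fincodimT V) (fun x => HS (emb x)).
case.
- by split => //.
- move=> a x y c d Hx Hy; rewrite /R.
  apply: (Ieq (tscale a (tsub (emb x) (tspan S c)) ++ tsub (emb y) (tspan S d))); last first.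
    by apply: Icat => //; apply: Isc.
  apply/tens_eqP => l m hl hm.
  rewrite tval_cat tval_scale // !tval_tsub // !tval_tspan // Hval //.
  rewrite [in RHS](eq_bigr (fun i : 'I_(size S) => a * (c i * tval l m (nth [::] S i)) + d i * tval l m (nth [::] S i))).
    by rewrite big_split /= -mulr_sumr; ring.
  by move=> i _; ring.
- by move=> x c d Hc E; rewrite /R -(tspan_ext E).
move=> s Hs; exists s => x; have [c [_ Hc]] := Hs x; exists c.
apply: (Ieq _ _ _ Hc); apply/tens_eqP => l m hl hm.
rewrite tval_tsub // tval_tspan //.
have -> : \sum_(i < size S) (0:k) * tval l m (nth [::] S i) = 0 by apply: big1 => i _; rewrite mul0r.
by rewrite subr0.
Qed.
Lemma dual_part1 (F : A -> B -> k^o) : twisted_finite_dual t F -> exists Z, cd_rep F Z.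
Proof.
move=> [[bl br] [I [[tI Imul] fI vI]]].
have tI' := tI; case: tI' => I0 Icat Isc Ieq.
have embA : forall (c : k) (x y : A),
    tens_eq [:: (c *: x + y, 1 : B)] (tscale c [:: (x, 1 : B)] ++ [:: (y, 1 : B)]).
  move=> c x y; apply/tens_eqP => l m hl hm.
  by rewrite tval_cat tval_scale // !tval_cons !tval_nil /= hl; ring.
have embB : forall (c : k) (x y : B),
    tens_eq [:: (1 : A, c *: x + y)] (tscale c [:: (1 : A, x)] ++ [:: (1 : A, y)]).
  move=> c x y; apply/tens_eqP => l m hl hm.
  by rewrite tval_cat tval_scale // !tval_cons !tval_nil /= hm; ring.
have [sA fA] := @fincodim_emb A (fun a => [:: (a, 1 : B)]) I tI fI embA.
have [sB fB] := @fincodim_emb B (fun b => [:: (1 : A, b)]) I tI fI embB.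
have Hmap : forall (f : A -> A) (g : B -> B) X a b,
    (forall l : A -> k, lfun l -> lfun (fun x => l (f x))) ->
    (forall m : B -> k, lfun m -> lfun (fun x => m (g x))) ->
    tens_eq X [:: (a, b)] -> I (map (fun q => (f q.1, g q.2)) X) -> I [:: (f a, g b)].
  by move=> f g X a b hf hg E HX; apply: (Ieq _ _ _ HX); apply: tens_eq_map1.
have iA : ideal (fun a => I [:: (a, 1)]).
  split => // a x Hx; split.
    have H := (Imul [:: (a, 1)] [:: (x, 1)] Hx).1; rewrite mtau11 /= in H.
    have := Hmap (fun z => a * z) (fun z => z * 1) _ _ _
              (fun l hl => lfun_mull a hl) (fun m hm => lfun_mulr 1 hm) (t1a x) H.
    by rewrite mul1r.
  have H := (Imul [:: (a, 1)] [:: (x, 1)] Hx).2; rewrite mtau11 /= in H.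
  have := Hmap (fun z => x * z) (fun z => z * 1) _ _ _
            (fun l hl => lfun_mull x hl) (fun m hm => lfun_mulr 1 hm) (t1a a) H.
  by rewrite mul1r.
have iB : ideal (fun b => I [:: (1, b)]).
  split => // y b Hb; split.
    have H := (Imul [:: (1, y)] [:: (1, b)] Hb).1; rewrite mtau11 /= in H.
    have := Hmap (fun z => 1 * z) (fun z => z * b) _ _ _
              (fun l hl => lfun_mull 1 hl) (fun m hm => lfun_mulr b hm) (tb1 y) H.
    by rewrite mul1r.
  have H := (Imul [:: (1, y)] [:: (1, b)] Hb).2; rewrite mtau11 /= in H.
  have := Hmap (fun z => 1 * z) (fun z => z * y) _ _ _
            (fun l hl => lfun_mull 1 hl) (fun m hm => lfun_mulr y hm) (tb1 b) H.
  by rewrite mul1r.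
have key : forall a b, I (mtau t [:: (a, 1)] [:: (1, b)]) -> F a b = 0.
  move=> a b H; rewrite mtau11 /= in H.
  have := Hmap (fun z => a * z) (fun z => z * b) _ _ _
            (fun l hl => lfun_mull a hl) (fun m hm => lfun_mulr b hm) (t1a 1) H.
  rewrite mulr1 mul1r => Hab.
  by have := vI _ Hab; rewrite /tform big_seq1.
have := @fd_decomp k A B F (fun a => I [:: (a, 1)]) (fun b => I [:: (1, b)]) iA fA iB fB bl br.
case.
- by move=> a Ha b; apply: key; exact: (Imul [:: (1, b)] [:: (a, 1)] Ha).2.
- by move=> b Hb a; apply: key; exact: (Imul [:: (a, 1)] [:: (1, b)] Hb).1.
move=> s [Hs Hsum]; exists s; split => // a b.
Qed.

Lemma dual_id_ok : dual_id_coalg_iso t tauo.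
Proof.
split.
- exact: dual_part1.
- exact: cd_twisted.
- by move=> Z Z' HZ HZ' E; apply: tens_eq_pt2 => a b; exact: E.
- move=> F Z s HF [HZ EZ] [Hs1 Hs2] Hj.
  apply: (tensn_inj (n := 2)).
  + apply: all_In => x Hx; have [j [Hj' Hx']] := In_flatten_map Hx.
    have [x0 [_ Hx'']] := In_flatten_map Hx'; by have [y0 [_ ->]] := In_map Hx''.
  + by apply: all_In => x Hx; have [u [v [-> _]]] := cotw_In HZ Hx.
  move=> pa pb.
  transitivity (tform (cd_form Z) (mtau t [:: (pa 0%N, pb 0%N)] [:: (pa 1%N, pb 1%N)])).
    rewrite /tform; under [in RHS]eq_bigr => x _ do rewrite EZ.
    rewrite -/(tform F _) -Hs2 big_map /tensn_val big_flatten /= big_map.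
    apply: eq_bigIn => j Hjs; have [[HZ1 E1] [HZ2 E2]] := Hj j Hjs.
    rewrite /tform !big_seq1 /= -E1 -E2 /cd_form big_flatten /= big_map big_distrl /=.
    apply: eq_bigr => x _; rewrite big_map big_distrr /=; apply: eq_bigr => y _.
    by rewrite !big_cons big_nil mulr1.
  rewrite -Kpt // /tensn_val; apply: eq_bigIn => w Hw.
  have [u [v [-> _]]] := cotw_In HZ Hw.
  by rewrite /= !big_cons big_nil mulr1 /ev.
- move=> F Z HF [HZ EZ]; rewrite -EZ /cd_form /cd_counit.
  by [].
Qed.
End Main.

Theorem theorem3p6 (k : fieldType) (A B : algType k)
    (t : B -> A -> seq (A * B)%type) :
  twisting_map t -> tau_continuous t ->
  exists tauo : (A -> k^o) -> (B -> k^o) -> seq ((B -> k^o) * (A -> k^o))%type,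
    [/\ is_dual_of t tauo, cotwisting_map tauo & dual_id_coalg_iso t tauo].
Proof.
move=> tw tc; exists (tauo t); split.
- exact: is_dual_tauo.
- exact: cotw_ok.
- exact: dual_id_ok.
Qed.
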